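(* Let $L$ be a free abelian group of rank $n$ and take $A=\mathbb{C}$. The pro-bundle $\mathcal{L}\mathrm{og}^\infty$ admits a unique continuous multiplicative trivialization $\varrho_{\mathrm{cont}}$ on $T$. The section $\varrho_{\mathrm{cont}}$ is $C^\infty$, is compatible with multiplication by $N$, and satisfies $\nabla(\varrho_{\mathrm{cont}})=-\kappa\,\varrho_{\mathrm{cont}}$. In particular $\varrho_{\mathrm{cont}}|_{T^{\mathrm{tors}}}=\varrho_{\mathrm{can}}$.
   Context: $R$ is the completion of $\mathbb{C}[L]$ (basis $\delta_\ell$) at its augmentation ideal $I$, identified with $\widehat{\mathrm{Sym}}\,L_{\mathbb{C}}$ via $\delta_\ell\mapsto\sum_k\ell^k/k!$. $V=\mathbb{R}\otimes L$, $T=V/L$. The logarithm sheaf $\mathcal{L}\mathrm{og}$ is the local system on $T$ whose sections over $U$ are the locally constant $f:\pi^{-1}(U)\to R$ with $f(v+\ell)=\delta_\ell^{-1}f(v)$. $\mathcal{L}\mathrm{og}^\infty$ is the inverse system of $C^\infty$ vector bundles associated to the local systems $\mathcal{L}\mathrm{og}/I^{k+1}\mathcal{L}\mathrm{og}$, with flat connection $\nabla$. With $x_1,\dots,x_n$ the coordinates dual to a basis $\ell_1,\dots,\ell_n$ of $L$, $\kappa=\sum_jdx_j\otimes\ell_j$ is an $R$-valued 1-form on $T$, independent of the basis. There is a unique isomorphism $\mathrm{pr}_1^*\mathcal{L}\mathrm{og}\otimes_{\underline R}\mathrm{pr}_2^*\mathcal{L}\mathrm{og}\cong+^*\mathcal{L}\mathrm{og}$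 sending $1\otimes1\mapsto1$ at the origin. A multiplicative trivialization over a subgroup $H\subset T$ is a family of generators $1_h\in\mathcal{L}\mathrm{og}_h$ ($h\in H$) with $1_h\equiv1\bmod I$ and $1_h\otimes1_{h'}\mapsto1_{h+h'}$; it is continuous on $T$ if $t\mapsto1_t$ is a continuous section of each $\mathcal{L}\mathrm{og}/I^{k+1}\mathcal{L}\mathrm{og}$. Compatibility with multiplication by $N$ means that the map $\mathcal{L}\mathrm{og}\to[N]^*\mathcal{L}\mathrm{og}$ induced by $\delta_\ell\mapsto\delta_{N\ell}$ sends $1_t$ to $1_{Nt}$. $T^{\mathrm{tors}}$ is the torsion subgroup of $T$, and $\varrho_{\mathrm{can}}$ is the unique multiplicative trivialization of $\mathcal{L}\mathrm{og}$ over $T^{\mathrm{tors}}$. *)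

(* Defs.v *)
From mathcomp Require Import all_boot all_order all_algebra.
From mathcomp Require Import all_classical all_reals all_analysis.
From mathcomp Require Import complex.
Import Order.TTheory GRing.Theory Num.Theory.
Import numFieldNormedType.Exports.

Set Implicit Arguments.
Unset Strict Implicit.
Unset Printing Implicit Defensive.

Local Open Scope ring_scope.

Section Log.
Variables (R : realType) (n : nat).

(* L = Z^n (basis l_1..l_n), V = R (x) L = R^n (row vectors),
   coordinates x_j(v) = v 0 j. *)
Definition latv (z : 'rV[int]_n) : 'rV[R]_n := map_mx (fun k : int => k%:~R) z.

(* R = completion of C[L] at I, identified with the completed symmetric
   algebra of L_C = C[[l_1,...,l_n]]: an element is its family of
   coefficients indexed by multi-indices m (monomial l_1^{m_1}...l_n^{m_n}). *)
Definition mindex := 'I_n -> nat.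
Definition ps := mindex -> R[i].

Definition mdeg (m : mindex) : nat := (\sum_(i < n) m i)%N.
Definition mzero : mindex := fun _ => 0%N.

Definition psmul (f g : ps) : ps := fun m =>
  \sum_(a : {ffun 'I_n -> 'I_(mdeg m).+1} | [forall i, (a i <= m i)%N])
     f (fun i => nat_of_ord (a i)) * g (fun i => (m i - a i)%N).

Definition psopp (f : ps) : ps := fun m => - f m.

Definition psgen (j : 'I_n) : ps := fun m =>
  if [forall i, m i == (i == j)%N :> nat] then 1 else 0.

(* image of delta_l (l = sum_j z_j l_j) : sum_k l^k/k! = exp(l) *)
Definition delta (z : 'rV[int]_n) : ps := fun m =>
  \prod_(i < n) (((z 0 i)%:~R : R[i]) ^+ m i / ((m i)`!)%:R).

(* the ring endomorphism of R induced by delta_l |-> delta_{N l}; under the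
   identification with completed Sym L_C it is l |-> N l, i.e. it multiplies
   the homogeneous component of degree d by N^d. *)
Definition mulN (N : nat) (f : ps) : ps := fun m => ((N ^ mdeg m)%N)%:R * f m.

(* A multiplicative trivialization over the subgroup H of T = V/L, where H
   is given through its preimage P = pi^{-1}(H) in V.  An element of the
   fibre Log_t is a function f on the coset pi^{-1}(t) with
   f(v + l) = delta_l^{-1} f(v); the family (1_h)_{h in H} is thus a single
   function F on pi^{-1}(H) with this equivariance.  The isomorphism
   pr1^*Log (x) pr2^*Log = +^*Log is (f (x) g)(v + w) = f(v) g(w). *)
Definition mult_triv (P : set 'rV[R]_n) (F : 'rV[R]_n -> ps) : Prop :=
  [/\ (forall v z, P v -> F (v + latv z) = psmul (delta (- z)) (F v)),
      (forall v, P v -> F v mzero = 1) &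
      (forall v w, P v -> P w -> F (v + w) = psmul (F v) (F w))].

Definition ccont (f : 'rV[R]_n -> R[i]) : Prop :=
  continuous (fun v => complex.Re (f v)) /\ continuous (fun v => complex.Im (f v)).

(* t |-> 1_t is a continuous section of each Log/I^{k+1}: each coefficient
   (of degree <= k, for every k) is a continuous function on V. *)
Definition cont_triv (F : 'rV[R]_n -> ps) : Prop :=
  forall m, ccont (fun v => F v m).

Fixpoint iterD (ds : seq 'rV[R]_n) (f : 'rV[R]_n -> R) : 'rV[R]_n -> R :=
  match ds with
  | [::] => f
  | d :: ds' => fun v => 'D_d (iterD ds' f) v
  end.

Definition smoothR (f : 'rV[R]_n -> R) : Prop :=
  forall ds : seq 'rV[R]_n,
    continuous (iterD ds f) /\ forall d v, derivable (iterD ds f) v d.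

Definition smooth_triv (F : 'rV[R]_n -> ps) : Prop :=
  forall m, smoothR (fun v => complex.Re (F v m)) /\ smoothR (fun v => complex.Im (F v m)).

Definition ebasis (j : 'I_n) : 'rV[R]_n := delta_mx 0 j.

(* nabla F = - kappa F with kappa = sum_j dx_j (x) l_j:
   d/dx_j F = - l_j F for every j (componentwise in each coefficient). *)
Definition nabla_eq (F : 'rV[R]_n -> ps) : Prop :=
  forall (j : 'I_n) (v : 'rV[R]_n) (m : mindex),
    let G := psopp (psmul (psgen j) (F v)) in
    is_derive v (ebasis j) (fun w => complex.Re (F w m)) (complex.Re (G m)) /\
    is_derive v (ebasis j) (fun w => complex.Im (F w m)) (complex.Im (G m)).

(* preimage of the torsion subgroup T^tors: Q (x) L *)
Definition tors_pre : set 'rV[R]_n :=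
  fun v => exists (k : nat) (z : 'rV[int]_n), (0 < k)%N /\ k%:R *: v = latv z.

End Log.

(* Main.v *)
Require Import Defs.
From mathcomp Require Import all_boot all_order all_algebra.
From mathcomp Require Import all_classical all_reals all_analysis.
From mathcomp Require Import complex.
Import Order.TTheory GRing.Theory Num.Theory.
Import numFieldNormedType.Exports.
Local Open Scope ring_scope.
Set Implicit Arguments.
Unset Strict Implicit.

Section Pol.
Variables (R : realType) (n : nat).
Local Notation V := 'rV[R]_n.

Inductive Pol : (V -> R) -> Prop :=
| PC c : Pol (fun _ => c)
| PX i : Pol (fun v => v 0 i)
| PD f g : Pol f -> Pol g -> Pol (fun v => f v + g v)
| PM f g : Pol f -> Pol g -> Pol (fun v => f v * g v).

Lemma coord_is_derive (i : 'I_n) (v d : V) :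
  is_derive v d (fun w : V => w 0 i) (d 0 i).
Proof.
have @f : {linear V -> R}.
  by exists (fun N : V => N 0 i); do 2![eexists]; do ?[constructor];
     rewrite ?mxE// => ? *; rewrite ?mxE//; move=> ?; rewrite !mxE.
have -> : (fun w : V => w 0 i) = f by [].
have fc : continuous f by exact: coord_continuous.
apply: DeriveDef; first exact/diff_derivable/linear_differentiable.
by rewrite deriveE ?diff_lin //; exact: linear_differentiable.
Qed.

Lemma Pol_prop f : Pol f -> continuous f /\
  forall d, (forall v, derivable f v d) /\ Pol (fun v => 'D_d f v).
Proof.
elim=> [c|i|f1 g1 _ [c1 H1] _ [c2 H2]|f1 g1 Q1 [c1 H1] Q2 [c2 H2]].
- split; first exact: cst_continuous.
  move=> d; split=> [v|]; first exact: derivable_cst.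
  have -> : (fun v => 'D_d (fun _ : V => c) v) = (fun _ => 0).
    by apply: funext => v; rewrite derive_cst.
  exact: PC.
- split; first exact: coord_continuous.
  move=> d; split=> [v|]; first by have [] := coord_is_derive i v d.
  have -> : (fun v => 'D_d (fun w : V => w 0 i) v) = (fun _ => d 0 i).
    by apply: funext => v; case: (coord_is_derive i v d).
  exact: PC.
- split; first by move=> x; exact: (continuousD (c1 x) (c2 x)).
  move=> d; have [D1 P1] := H1 d; have [D2 P2] := H2 d; split=> [v|].
    exact: derivableD.
  have -> : (fun v => 'D_d (fun v0 => f1 v0 + g1 v0) v) =
            (fun v => 'D_d f1 v + 'D_d g1 v).
    by apply: funext => v; rewrite deriveD.
  exact: PD.
- split; first by move=> x; exact: (continuousM (c1 x) (c2 x)).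
  move=> d; have [D1 P1] := H1 d; have [D2 P2] := H2 d; split=> [v|].
    exact: derivableM.
  have -> : (fun v => 'D_d (fun v0 => f1 v0 * g1 v0) v) =
            (fun v => f1 v * 'D_d g1 v + g1 v * 'D_d f1 v).
    by apply: funext => v; rewrite (deriveM (D1 v) (D2 v)).
  exact: (PD (PM Q1 P2) (PM Q2 P1)).
Qed.
End Pol.
Arguments Pol {R n} _.
Arguments PC {R n} c.
Arguments PX {R n} i.
Arguments PD {R n f g}.
Arguments PM {R n f g}.
Section Coef.
Variables (R : realType) (n : nat).
Local Notation V := 'rV[R]_n.

Definition fco (v : V) (m : mindex n) : R :=
  \prod_(i < n) ((- v 0 i) ^+ m i / ((m i)`!)%:R).
Definition Fc (v : V) : ps R n := fun m => real_complex R (fco v m).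

Lemma ReFc v m : complex.Re (Fc v m) = fco v m. Proof. by []. Qed.
Lemma ImFc v m : complex.Im (Fc v m) = 0. Proof. by []. Qed.

Lemma Pol_pow f k : Pol f -> Pol (fun v : V => f v ^+ k).
Proof.
move=> Pf; elim: k => [|k IH].
  have -> : (fun v : V => f v ^+ 0) = (fun _ => 1) by apply: funext => v; rewrite expr0.
  exact: PC.
have -> : (fun v : V => f v ^+ k.+1) = (fun v => f v * f v ^+ k).
  by apply: funext => v; rewrite exprS.
exact: (PM Pf IH).
Qed.

Lemma Pol_prod (r : seq 'I_n) (g : 'I_n -> V -> R) :
  (forall i, Pol (g i)) -> Pol (fun v => \prod_(i <- r) g i v).
Proof.
move=> Pg; elim: r => [|a r IH].
  have -> : (fun v : V => \prod_(i <- [::]) g i v) = (fun _ => 1).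
    by apply: funext => v; rewrite big_nil.
  exact: PC.
have -> : (fun v : V => \prod_(i <- a :: r) g i v) = (fun v => g a v * \prod_(i <- r) g i v).
  by apply: funext => v; rewrite big_cons.
exact: (PM (Pg a) IH).
Qed.

Lemma Pol_fco m : Pol (fun v => fco v m).
Proof.
apply: Pol_prod => i.
apply: (@PM _ _ (fun v : V => (- v 0 i) ^+ m i) (fun _ => ((m i)`!)%:R^-1)); last exact: PC.
apply: Pol_pow.
have -> : (fun v : V => - v 0 i) = (fun v => (-1) * v 0 i).
  by apply: funext => v; rewrite mulN1r.
exact: (PM (PC (-1 : R)) (PX i)).
Qed.

Lemma Pol_smooth (f : V -> R) : Pol f -> smoothR f.
Proof.
move=> Pf ds.
have : Pol (Defs.iterD ds f).
  elim: ds => [|d ds IH] //=.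
  by have [_ /(_ d) [_]] := Pol_prop IH.
move=> /Pol_prop [c H]; split => // d v.
by have [] := H d.
Qed.

Lemma Fc_smooth : smooth_triv Fc.
Proof.
move=> m; split.
  exact: Pol_smooth (Pol_fco m).
exact: Pol_smooth (PC (0:R)).
Qed.

Lemma Fc_cont : cont_triv Fc.
Proof.
move=> m; split.
  by have [] := Pol_prop (Pol_fco m).
exact: cst_continuous.
Qed.

End Coef.
Arguments Fc {R n}.
Arguments fco {R n}.
From mathcomp Require Import ring lra.
Section Alg.
Variables (R : realType) (n : nat).
Local Notation V := 'rV[R]_n.

Lemma leq_mdeg (m : mindex n) i : (m i <= mdeg m)%N.
Proof. by rewrite /mdeg (bigD1 i) //= leq_addr. Qed.

Lemma fact_neq0 k : (k`!)%:R != 0 :> R.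
Proof. by rewrite pnatr_eq0 -lt0n fact_gt0. Qed.

Lemma binom1 (x y : R) N : (x + y) ^+ N / (N`!)%:R =
  \sum_(k < N.+1) ((y ^+ k / (k`!)%:R) * (x ^+ (N - k) / ((N - k)`!)%:R)).
Proof.
rewrite exprDn mulr_suml; apply: eq_bigr => k _.
have kN : (k <= N)%N by rewrite -ltnS.
rewrite -(bin_fact kN) !natrM -mulr_natr.
have := fact_neq0 k; have := fact_neq0 (N - k).
have : ('C(N, k))%:R != 0 :> R by rewrite pnatr_eq0 -lt0n bin_gt0.
move=> h1 h2 h3; field.
by rewrite h1 h2 h3.
Qed.

Lemma fco_mul (v w : V) (m : mindex n) :
  fco (v + w) m = \sum_(a : {ffun 'I_n -> 'I_(mdeg m).+1} | [forall i, (a i <= m i)%N])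
     fco v (fun i => nat_of_ord (a i)) * fco w (fun i => (m i - a i)%N).
Proof.
rewrite /fco.
transitivity (\prod_(i < n) \sum_(k < (mdeg m).+1 | (k <= m i)%N)
   (((- v 0 i) ^+ k / (k`!)%:R) * ((- w 0 i) ^+ (m i - k) / ((m i - k)`!)%:R))).
  apply: eq_bigr => i _.
  rewrite mxE opprD addrC binom1.
  rewrite (@big_ord_widen _ _ _ (m i).+1 (mdeg m).+1 (fun k => ((- v 0 i) ^+ k / (k`!)%:R) * ((- w 0 i) ^+ (m i - k) / ((m i - k)`!)%:R))) ?ltnS ?leq_mdeg //; apply: eq_bigl => k; rewrite ltnS.
rewrite bigA_distr_big_dep; apply: eq_big => a.
  by apply/familyP/forallP => H i; have := H i.
by rewrite -big_split.
Qed.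

End Alg.
Section Alg2.
Variables (R : realType) (n : nat).
Local Notation V := 'rV[R]_n.

Lemma Fc_mul (v w : V) : Fc (v + w) = psmul (Fc v) (Fc w).
Proof.
apply: funext => m; rewrite /Fc fco_mul rmorph_sum /psmul; apply: eq_bigr => a _.
by rewrite rmorphM.
Qed.

Lemma Fc0 (v : V) : Fc v (@Defs.mzero n) = 1.
Proof.
rewrite /Fc /fco big1 ?rmorph1 // => i _.
by rewrite /Defs.mzero expr0 fact0 invr1 mulr1.
Qed.

Lemma Fc_latv z : Fc (latv R z) = @Defs.delta R n (- z).
Proof.
apply: funext => m; rewrite /Fc /fco rmorph_prod; apply: eq_bigr => i _.
by rewrite rmorphM fmorphV rmorphXn rmorphN !mxE rmorph_int rmorph_nat intrN.
Qed.

Lemma Fc_mult : mult_triv setT (@Fc R n).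
Proof.
split=> [v z _|v _|v w _ _]; last exact: Fc_mul; last exact: Fc0.
by rewrite addrC Fc_mul Fc_latv.
Qed.

Lemma Fc_mulN (N : nat) (v : V) : Fc (N%:R *: v) = mulN N (Fc v).
Proof.
apply: funext => m; rewrite /mulN /Fc.
have -> : ((N ^ mdeg m)%N)%:R = real_complex R ((N ^ mdeg m)%N)%:R by rewrite rmorph_nat.
rewrite -rmorphM; congr (real_complex R _).
rewrite /fco (eq_bigr (fun i => N%:R ^+ m i * ((- v 0 i) ^+ m i / ((m i)`!)%:R))).
  by rewrite big_split /= prodrXr natrX.
move=> i _; rewrite !mxE -mulrN exprMn mulrA //.
Qed.
End Alg2.
Section Nabla.
Variables (R : realType) (n : nat).
Local Notation V := 'rV[R]_n.

Lemma g_derive (i : 'I_n) (k : nat) (c : R) (v d : V) :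
  is_derive v d (fun w : V => (- w 0 i) ^+ k * c)
    ((k%:R * (- v 0 i) ^+ k.-1) * (- d 0 i) * c).
Proof.
have H1 : is_derive v d (fun w : V => - w 0 i) (- d 0 i).
  exact: is_deriveN (coord_is_derive i v d).
have H2 := is_deriveX k H1.
rewrite exprfctE in H2.
have H3 := is_deriveM H2 (is_derive_cst c v d).
apply: is_derive_eq H3 _.
rewrite scaler0 add0r /GRing.scale /=.
by rewrite mulrC.
Qed.
End Nabla.
Section Nabla2.
Variables (R : realType) (n : nat).
Local Notation V := 'rV[R]_n.

Lemma prod_derive0 (r : seq 'I_n) (P : pred 'I_n) (g : 'I_n -> V -> R) (v d : V) :
  (forall i, P i -> is_derive v d (g i) 0) ->
  is_derive v d (fun w => \prod_(i <- r | P i) g i w) 0.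
Proof.
move=> Hg; elim: r => [|a r IH].
  have -> : (fun w => \prod_(i <- [::] | P i) g i w) = cst 1.
    by apply: funext => w; rewrite big_nil.
  exact: is_derive_cst.
case Pa: (P a).
  have -> : (fun w => \prod_(i <- a :: r | P i) g i w) =
     g a * (fun w => \prod_(i <- r | P i) g i w).
    by apply: funext => w; rewrite big_cons Pa.
  apply: is_derive_eq (is_deriveM (Hg a Pa) IH) _.
  by rewrite !scaler0 addr0.
have -> : (fun w => \prod_(i <- a :: r | P i) g i w) =
     (fun w => \prod_(i <- r | P i) g i w).
  by apply: funext => w; rewrite big_cons Pa.
exact: IH.
Qed.

Lemma fco_derive (v : V) j m :
  is_derive v (ebasis R j) (fun w => fco w m)
    (- (if (0 < m j)%N then fco v (fun i => (m i - (i == j))%N) else 0)).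
Proof.
set d := ebasis R j.
have E : (fun w => fco w m) =
  (fun w : V => (- w 0 j) ^+ m j * ((m j)`!%:R)^-1) *
  (fun w : V => \prod_(i < n | i != j) ((- w 0 i) ^+ m i * ((m i)`!%:R)^-1)).
  by apply: funext => w; rewrite /fco (bigD1 j).
rewrite E.
have Hp : is_derive v d
   (fun w : V => \prod_(i < n | i != j) ((- w 0 i) ^+ m i * ((m i)`!%:R)^-1)) 0.
  apply: prod_derive0 => i ij.
  apply: is_derive_eq (g_derive i (m i) _ v d) _.
  by rewrite /d /ebasis mxE (negbTE ij) andbF oppr0 mulr0 mul0r.
apply: is_derive_eq (is_deriveM (g_derive j (m j) _ v d) Hp) _.
rewrite /d /ebasis mxE !eqxx /= scaler0 add0r /GRing.scale /=.
case Emj: (m j) => [|k] /=.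
  by rewrite !mul0r mulr0 oppr0.
rewrite /fco [in RHS](bigD1 j) //= eqxx Emj subn1 /=.
rewrite [in RHS](eq_bigr (fun i => (- v 0 i) ^+ m i / ((m i)`!)%:R)); last first.
  by move=> i ij; rewrite (negbTE ij) subn0.
rewrite factS natrM.
have h1 := fact_neq0 R k.
have h2 : (k.+1)%:R != 0 :> R by rewrite pnatr_eq0.
field.
by rewrite h1 addrC natr1 h2.
Qed.
End Nabla2.
Section Nabla3.
Variables (R : realType) (n : nat).
Local Notation V := 'rV[R]_n.

Lemma psmul_gen (j : 'I_n) (Y : ps R n) (m : mindex n) :
  psmul (psgen R j) Y m =
  if (0 < m j)%N then Y (fun i => (m i - (i == j))%N) else 0.
Proof.
rewrite /psmul /psgen; case: ifP => mj.
  pose aj : {ffun 'I_n -> 'I_(mdeg m).+1} := [ffun i => inord (i == j)].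
  have ajv i : nat_of_ord (aj i) = (i == j) :> nat.
    rewrite ffunE inordK // ltnS; apply: leq_trans (leq_mdeg m j).
    by case: (i == j).
  rewrite (bigD1 aj) /=; last first.
    apply/forallP => i; rewrite ajv; case: eqP => [->|] //.
  have -> : [forall i, nat_of_ord (aj i) == (i == j) :> nat].
    by apply/forallP => i; rewrite ajv.
  rewrite big1 ?addr0 ?mul1r.
    by congr Y; apply: funext => i; rewrite ajv.
  move=> a /andP [_ aa]; case: ifP => [/forallP Ha|_]; last by rewrite mul0r.
  exfalso; move/eqP: aa; apply; apply/ffunP => i; apply/val_inj.
  by rewrite /= ajv; apply/eqP; exact: Ha.
apply: big1 => a /forallP Ha; case: ifP => [/forallP Hb|_]; last by rewrite mul0r.
exfalso; have := Ha j; have /eqP -> := Hb j; rewrite eqxx.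
by rewrite mj.
Qed.

Lemma Fc_nabla : nabla_eq (@Fc R n).
Proof.
move=> j v m /=.
rewrite /psopp psmul_gen.
have -> : (- (if (0 < m j)%N then Fc v (fun i => (m i - (i == j))%N) else 0))
   = real_complex R (- (if (0 < m j)%N then fco v (fun i => (m i - (i == j))%N) else 0)).
  by rewrite rmorphN; case: ifP => _ //; rewrite rmorph0.
split; first exact: fco_derive.
apply: is_derive_eq (is_derive_cst 0 v _) _.
by [].
Qed.
End Nabla3.
Section Dens.
Variables (R : realType) (n : nat).
Local Notation V := 'rV[R]_n.

Lemma tors_dense (v : V) (e : R) : 0 < e ->
  exists w, tors_pre w /\ ball v e w.
Proof.
move=> e0.
pose k := (`|Num.floor (e^-1)|%N).+1.
have k0 : (0 < k)%N by [].
have kR0 : 0 < k%:R :> R by rewrite ltr0n.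
have ke : e^-1 < k%:R.
  have fe : 0 <= Num.floor (e^-1) by rewrite Num.Theory.floor_ge0 invr_ge0 ltW.
  have := Num.Theory.floorD1_gt (e^-1); rewrite intrD.
  have fa : ((`|Num.floor e^-1|%N)%:R : R) = (Num.floor e^-1)%:~R.
    by rewrite -[in RHS](gez0_abs fe).
  by rewrite /k -natr1 fa.
pose z : 'rV[int]_n := \row_j Num.floor (k%:R * v 0 j).
exists (k%:R^-1 *: latv R z); split.
  exists k, z; split => //.
  by rewrite scalerA mulfV ?gt_eqF // scale1r.
split => // i j; rewrite /ball /= !mxE (ord1 i).
have [a b] : ((Num.floor (k%:R * v 0 j))%:~R <= k%:R * v 0 j /\
        k%:R * v 0 j < (Num.floor (k%:R * v 0 j))%:~R + 1).
  split; first exact: Num.Theory.floor_le.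
  by have := Num.Theory.floorD1_gt (k%:R * v 0 j); rewrite intrD.
move: a b; set f := (Num.floor _)%:~R; move=> a b.
have -> : v 0 j - k%:R^-1 * f = k%:R^-1 * (k%:R * v 0 j - f).
  by rewrite mulrBr mulrA mulVf ?gt_eqF // mul1r.
rewrite normrM gtr0_norm ?invr_gt0 // ger0_norm ?subr_ge0 //.
have h1 : k%:R * v 0 j - f < 1 by lra.
rewrite -(ltr_pM2l kR0) mulrA mulfV ?gt_eqF // mul1r.
apply: lt_trans h1 _.
have ee : e * e^-1 = 1 by rewrite mulfV ?gt_eqF.
nra.
Qed.

Lemma dens_zero (h : V -> R) : continuous h ->
  (forall v, tors_pre v -> h v = 0) -> forall v, h v = 0.
Proof.
move=> hc h0 v.
have cl : closed (h @^-1` [set 0]).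
  by move: hc => /continuous_closedP; apply; exact: closed_eq.
rewrite closure_id in cl.
suff : closure (h @^-1` [set 0]) v by rewrite -cl.
move=> B /nbhs_ballP [e e0 eB].
have [w [tw vw]] := tors_dense v e0.
by exists w; split; [exact: h0 | exact: eB].
Qed.
End Dens.
Section Uniq.
Variables (R : realType) (n : nat).
Local Notation V := 'rV[R]_n.
Local Notation mz := (@Defs.mzero n).

Definition ff0 (m : mindex n) : {ffun 'I_n -> 'I_(mdeg m).+1} := [ffun _ => ord0].
Definition ffm (m : mindex n) : {ffun 'I_n -> 'I_(mdeg m).+1} := [ffun i => inord (m i)].

Lemma ffmE m i : nat_of_ord (ffm m i) = m i.
Proof. by rewrite ffunE inordK // ltnS leq_mdeg. Qed.

Lemma mdeg_sub (m a : mindex n) : (forall i, a i <= m i)%N ->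
  (mdeg (fun i => m i - a i) + mdeg a = mdeg m)%N.
Proof.
move=> H; rewrite /mdeg -big_split /=; apply: eq_bigr => i _.
by rewrite subnK.
Qed.

Lemma mdeg_pos (a : mindex n) i : (0 < a i)%N -> (0 < mdeg a)%N.
Proof. by move=> h; rewrite /mdeg (bigD1 i) //= ltn_addr. Qed.

Lemma mdeg_lt (a m : mindex n) i : (forall i, a i <= m i)%N -> (a i < m i)%N ->
  (mdeg a < mdeg m)%N.
Proof.
move=> H h; rewrite /mdeg (bigD1 i) //= [X in (_ < X)%N](bigD1 i) //=.
by rewrite -addSn leq_add // leq_sum.
Qed.

Lemma mdeg0 : mdeg mz = 0%N.
Proof. by rewrite /mdeg big1. Qed.

Lemma mdeg0_eq (m : mindex n) : mdeg m = 0%N -> m = mz.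
Proof.
move=> h; apply: funext => i; rewrite /Defs.mzero.
by apply/eqP; rewrite -leqn0 -h leq_mdeg.
Qed.

Lemma ff_ne0 m (a : {ffun 'I_n -> 'I_(mdeg m).+1}) : a != ff0 m ->
  exists i, (0 < a i)%N.
Proof.
move=> h; case: (boolP [exists i, (0 < a i)%N]) => [/existsP //|/existsPn H].
case/eqP: h; apply/ffunP => i; apply/val_inj; rewrite ffunE /=.
by move: (H i); rewrite lt0n negbK => /eqP.
Qed.

Lemma ff_nem m (a : {ffun 'I_n -> 'I_(mdeg m).+1}) :
  (forall i, a i <= m i)%N -> a != ffm m -> exists i, (a i < m i)%N.
Proof.
move=> le h; case: (boolP [exists i, (a i < m i)%N]) => [/existsP //|/existsPn H].
case/eqP: h; apply/ffunP => i; apply/val_inj; rewrite /= ffmE.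
by apply/eqP; rewrite eqn_leq le /= leqNgt H.
Qed.

Lemma psmul_split (X Y : ps R n) m : (0 < mdeg m)%N ->
  psmul X Y m = X mz * Y m + X m * Y mz +
   \sum_(a : {ffun 'I_n -> 'I_(mdeg m).+1} | ([forall i, (a i <= m i)%N] && (a != ff0 m)) && (a != ffm m))
      X (fun i => nat_of_ord (a i)) * Y (fun i => (m i - a i)%N).
Proof.
move=> mp; rewrite /psmul (bigD1 (ff0 m)) /=; last by apply/forallP => i; rewrite ffunE.
rewrite (bigD1 (ffm m)) /=; last first.
  apply/andP; split; first by apply/forallP => i; rewrite ffmE.
  apply/eqP => e; move: mp; rewrite (mdeg0_eq (m := m)) ?mdeg0 //.
  rewrite /mdeg big1 // => i _; rewrite -(ffmE m i) e ffunE //.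
rewrite addrA; congr (_ + _ + _).
  congr (X _ * Y _); apply: funext => i; rewrite ?ffunE ?subn0 //.
congr (X _ * Y _); apply: funext => i; rewrite ffmE ?subnn //.
Qed.

Lemma rest_props m (a : {ffun 'I_n -> 'I_(mdeg m).+1}) :
  ([forall i, (a i <= m i)%N] && (a != ff0 m)) && (a != ffm m) ->
  (mdeg (fun i => nat_of_ord (a i)) < mdeg m)%N /\
  (mdeg (fun i => (m i - a i)%N) < mdeg m)%N.
Proof.
move=> /andP [/andP [/forallP le n0] nm].
have [i ai] := ff_nem le nm.
have [j aj] := ff_ne0 n0.
split; first exact: (mdeg_lt (i := i)).
have := mdeg_sub (m := m) (a := fun i => nat_of_ord (a i)) le.
have := mdeg_pos (a := fun i => nat_of_ord (a i)) aj.
have aux : forall x y z, (x + y = z)%N -> (0 < y)%N -> (x < z)%N.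
  by move=> x y z <- ?; rewrite -[X in (X < _)%N]addn0 ltn_add2l.
by move=> p E; exact: aux E p.
Qed.

Lemma psmul_diff (X X' Y Y' : ps R n) m : (0 < mdeg m)%N ->
  X mz = 1 -> X' mz = 1 -> Y mz = 1 -> Y' mz = 1 ->
  (forall a, (mdeg a < mdeg m)%N -> X a = X' a /\ Y a = Y' a) ->
  psmul X Y m - psmul X' Y' m = (X m - X' m) + (Y m - Y' m).
Proof.
move=> mp X0 X'0 Y0 Y'0 H; rewrite !psmul_split // X0 X'0 Y0 Y'0.
rewrite (eq_bigr (fun a : {ffun 'I_n -> 'I_(mdeg m).+1} => X' (fun i => nat_of_ord (a i)) * Y' (fun i => (m i - a i)%N)) ).
  by rewrite !mul1r !mulr1; ring.
move=> a /rest_props [h1 h2].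
by rewrite (H _ h1).1 (H _ h2).2.
Qed.

Lemma psmul_diff2 (X Y Y' : ps R n) m : (0 < mdeg m)%N ->
  X mz = 1 ->
  (forall a, (mdeg a < mdeg m)%N -> Y a = Y' a) ->
  psmul X Y m - psmul X Y' m = Y m - Y' m.
Proof.
move=> mp X0 H; rewrite !psmul_split // X0.
rewrite (H mz) ?mdeg0 //.
rewrite (eq_bigr (fun a : {ffun 'I_n -> 'I_(mdeg m).+1} => X (fun i => nat_of_ord (a i)) * Y' (fun i => (m i - a i)%N)) ).
  by rewrite !mul1r; ring.
move=> a /rest_props [h1 h2].
by rewrite (H _ h2).
Qed.

Lemma delta0 z : Defs.delta R (-z) mz = 1.
Proof.
by rewrite /Defs.delta big1 // => i _; rewrite /Defs.mzero expr0 fact0 invr1 mulr1.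
Qed.

Lemma tors0 : tors_pre (0 : V).
Proof.
exists 1%N, 0; split => //; rewrite scaler0; apply/matrixP => i j.
by rewrite !mxE.
Qed.

Lemma tors_mul (v : V) i : tors_pre v -> tors_pre (i%:R *: v).
Proof.
move=> [k [z [k0 e]]]; exists k, ((i%:Z) *: z); split => //.
rewrite scalerA mulrC -scalerA e; apply/matrixP => a b.
by rewrite !mxE intrM.
Qed.

Lemma tors_unique (G F : V -> ps R n) :
  mult_triv (@tors_pre R n) G -> mult_triv (@tors_pre R n) F ->
  forall v, tors_pre v -> G v = F v.
Proof.
move=> [Ge G0 Gm] [Fe F0 Fm].
suff H : forall d m, (mdeg m <= d)%N -> forall v, tors_pre v -> G v m = F v m.
  by move=> v tv; apply: funext => m; exact: H (leqnn _) v tv.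
elim=> [|d IH] m md v tv.
  move: md; rewrite leqn0 => /eqP /mdeg0_eq ->.
  by rewrite G0 ?F0.
have [mle|mgt] := leqP (mdeg m) d; first exact: IH.
have mp : (0 < mdeg m)%N by apply: leq_ltn_trans mgt.
have IH' : forall a, (mdeg a < mdeg m)%N -> forall w, tors_pre w -> G w a = F w a.
  move=> a am w tw; apply: IH tw; rewrite -ltnS; exact: leq_trans am md.
pose D w := G w m - F w m.
have Dadd u w : tors_pre u -> tors_pre w -> D (u + w) = D u + D w.
  move=> tu tw; rewrite /D Gm // Fm //; apply: psmul_diff => //; rewrite ?G0 ?F0 //.
  by move=> a am; split; apply: IH'.
have Dper u (z : 'rV[int]_n) : tors_pre u -> D (u + latv R z) = D u.
  move=> tu; rewrite /D Ge // Fe //; apply: psmul_diff2 => //; first exact: delta0.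
  by move=> a am; apply: IH'.
have D0 : D 0 = 0.
  have h := Dadd 0 0 tors0 tors0; rewrite addr0 in h.
  by rewrite -[LHS](addrK (D 0) (D 0)) -h subrr.
have Dmul i : D (i%:R *: v) = i%:R * D v.
  elim: i => [|i IHi]; first by rewrite scale0r D0 mul0r.
  rewrite -natr1 scalerDl scale1r Dadd ?IHi; first by rewrite -natr1 mulrDl mul1r.
    exact: tors_mul tv.
  exact: tv.
have [k [z [k0 e]]] := tv.
have := Dmul k; rewrite e.
have -> : D (latv R z) = 0 by rewrite -(add0r (latv R z)) Dper ?D0 //; exact: tors0.
move=> /esym /eqP; rewrite mulf_eq0 pnatr_eq0 eqn0Ngt k0 /= /D subr_eq0 => /eqP //.
Qed.
End Uniq.
Lemma mult_restrict (R : realType) (n : nat) (P : set 'rV[R]_n) (G : 'rV[R]_n -> ps R n) :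
  mult_triv setT G -> mult_triv P G.
Proof. by case=> a b c; split => *; [apply: a | apply: b | apply: c]. Qed.

Lemma complex_ext (R : realType) (x y : R[i]) :
  complex.Re x = complex.Re y -> complex.Im x = complex.Im y -> x = y.
Proof. by case: x => a b; case: y => c d /= -> ->. Qed.

Theorem mainTheorem13 (R : realType) (n : nat) :
  exists F : 'rV[R]_n -> ps R n,
    [/\ (* continuous multiplicative trivialization on T ... *)
        mult_triv setT F /\ cont_triv F,
        (* ... and it is the unique one *)
        (forall G : 'rV[R]_n -> ps R n,
            mult_triv setT G -> cont_triv G -> G = F),
        (* C^infinity *)
        smooth_triv F &
        (* compatible with multiplication by N *)
        (forall (N : nat) (v : 'rV[R]_n), (0 < N)%N ->
            F (N%:R *: v) = mulN N (F v))] /\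
    [/\ (* nabla rho = - kappa rho *)
        nabla_eq F &
        (* restriction to T^tors is rho_can, the (unique) multiplicative
           trivialization over T^tors *)
        forall G : 'rV[R]_n -> ps R n,
          mult_triv (@tors_pre R n) G ->
          forall v, tors_pre v -> G v = F v].
Proof.
exists (@Fc R n); split; last first.
  split; first exact: Fc_nabla.
  move=> G mG v tv; apply: tors_unique mG (mult_restrict _ (@Fc_mult R n)) v tv.
split.
- split; [exact: Fc_mult | exact: Fc_cont].
- move=> G mG cG; apply: funext => v; apply: funext => m.
  have Ht : forall w, tors_pre w -> G w = Fc w.
    exact: tors_unique (mult_restrict _ mG) (mult_restrict _ (@Fc_mult R n)).
  have [cG1 cG2] := cG m; have [cF1 cF2] := @Fc_cont R n m.
  apply: complex_ext; apply/eqP; rewrite -subr_eq0; apply/eqP.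
    apply: (dens_zero (h := fun w => complex.Re (G w m) - complex.Re (Fc w m))).
      by move=> x; apply: continuousB; [exact: cG1 | exact: cF1].
    by move=> w tw; rewrite Ht // subrr.
  apply: (dens_zero (h := fun w => complex.Im (G w m) - complex.Im (Fc w m))).
    by move=> x; apply: continuousB; [exact: cG2 | exact: cF2].
  by move=> w tw; rewrite Ht // subrr.
- exact: Fc_smooth.
- by move=> N v _; exact: Fc_mulN.
Qed.
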